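(* Assume $|\chi|=\infty$ and that $q=\chi^{-1}(a)$ is not a root of unity. Let $y=[V_2(\varepsilon)]$ in $r(\mathcal W)$. Then for every $m\ge1$, $$[V_m(\varepsilon)]=\sum_{i=0}^{[\frac{m-1}{2}]}(-1)^i\binom{m-1-i}{i}\chi^iy^{m-1-2i}\quad\text{in } r(\mathcal W).$$
   Context: Let $k$ be an algebraically closed field of characteristic zero, $G$ a group, $a$ a central element of $G$, $\hat G$ the group of characters $G\to k^\times$ with identity $\varepsilon$, and $\chi\in\hat G$ with $\chi(a)\ne1$. $H=kG(\chi^{-1},a,0)$ is the Hopf algebra generated by the group $G$ and $x$ with $xg=\chi^{-1}(g)gx$, $\Delta(g)=g\otimes g$, $\Delta(x)=x\otimes a+1\otimes x$; tensor products of $H$-modules: $g(m\otimes n)=gm\otimes gn$, $x(m\otimes n)=xm\otimes an+m\otimes xn$. $V_t(\lambda)$ ($\lambda\in\hat G$, $t\ge1$) has basis $m_0,\dots,m_{t-1}$, $gm_i=\chi^i(g)\lambda(g)m_i$, $xm_i=m_{i+1}$ ($i\le t-2$), $xm_{t-1}=0$. $\mathcal W$ is the category of finite-dimensional weight $H$-modules and $r(\mathcal W)$ its Green ring (abelian group on isoclasses $[V]$ modulo $[U\oplus V]=[U]+[V]$, product $[U][V]=[U\otimes V]$). Each $\lambda\in\hat G$ (in particular $\chi^i$) denotes the element $[V_1(\lambda)]$ of $r(\mathcal W)$; $[r]$ is the integer part. *)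

(* Defs.v *)
(* Setting of the paper: k algebraically closed field of
   characteristic 0, G an arbitrary (possibly infinite) group (mathcomp's
   [groupType] from boot/monoid.v), H = kG(chi^-1, a, 0). *)
From HB Require Import structures.
From mathcomp Require Import all_boot all_order all_algebra.
From mathcomp Require Import mxtens.
Set Implicit Arguments.
Unset Strict Implicit.
Unset Printing Implicit Defensive.
Import Order.TTheory GRing.Theory Num.Theory.
Local Open Scope ring_scope.

Definition is_char (k : fieldType) (G : groupType) (lam : G -> k) : Prop :=
  lam 1%g = 1 /\ forall g h : G, lam (g * h)%g = lam g * lam h.

Definition eps (k : fieldType) (G : groupType) : G -> k := fun _ => 1.
Definition charpow (k : fieldType) (G : groupType) (chi : G -> k) (i : nat)
  : G -> k := fun g => chi g ^+ i.

(* A finite-dimensional (candidate) H-module, on column vectors k^hdim: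
   hrho g is the action of g in G, hx is the action of x. *)
Record Hmod (k : fieldType) (G : groupType) := HMod {
  hdim : nat;
  hrho : G -> 'M[k]_hdim;
  hx : 'M[k]_hdim }.
Arguments HMod {k G} hdim hrho hx.

Definition is_Hmod (k : fieldType) (G : groupType) (chi : G -> k)
  (M : Hmod k G) : Prop :=
  [/\ hrho M 1%g = 1%:M,
      (forall g h : G, hrho M (g * h)%g = hrho M g *m hrho M h) &
      (forall g : G, hx M *m hrho M g = (chi g)^-1 *: (hrho M g *m hx M))].

(* Weight module: M is the (necessarily direct) sum of its weight spaces
   M_lam, i.e. M has a basis (columns of an invertible P) of weight vectors. *)
Definition is_weight (k : fieldType) (G : groupType) (M : Hmod k G) : Prop :=
  exists P : 'M[k]_(hdim M), P \in unitmx /\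
    forall j : 'I_(hdim M), exists lam : G -> k, is_char lam /\
      forall g : G, hrho M g *m col j P = lam g *: col j P.

Definition inW (k : fieldType) (G : groupType) (chi : G -> k) (M : Hmod k G)
  : Prop := is_Hmod chi M /\ is_weight M.

Definition Hiso (k : fieldType) (G : groupType) (M N : Hmod k G) : Prop :=
  exists (P : 'M[k]_(hdim N, hdim M)) (Q : 'M[k]_(hdim M, hdim N)),
    [/\ Q *m P = 1%:M, P *m Q = 1%:M,
        (forall g : G, P *m hrho M g = hrho N g *m P) &
        P *m hx M = hx N *m P].

Definition Hsum (k : fieldType) (G : groupType) (M N : Hmod k G) : Hmod k G :=
  HMod (hdim M + hdim N)
    (fun g => block_mx (hrho M g) 0 0 (hrho N g))
    (block_mx (hx M) 0 0 (hx N)).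

Definition Hzero (k : fieldType) (G : groupType) : Hmod k G :=
  HMod 0 (fun _ => 0) 0.

Fixpoint Hmul (k : fieldType) (G : groupType) (n : nat) (M : Hmod k G)
  : Hmod k G :=
  if n is n'.+1 then Hsum M (Hmul n' M) else Hzero k G.

Definition Hbig (k : fieldType) (G : groupType) (s : seq (Hmod k G))
  : Hmod k G := foldr (@Hsum k G) (Hzero k G) s.

Definition Htens (k : fieldType) (G : groupType) (a : G) (M N : Hmod k G)
  : Hmod k G :=
  HMod (hdim M * hdim N)
    (fun g => hrho M g *t hrho N g)
    (hx M *t hrho N a + (1%:M : 'M[k]_(hdim M)) *t hx N).

(* V_t(lam): basis m_0..m_{t-1}, g m_i = chi^i(g) lam(g) m_i,
   x m_i = m_{i+1}, x m_{t-1} = 0. *)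
Definition Vmod (k : fieldType) (G : groupType) (chi : G -> k) (t : nat)
  (lam : G -> k) : Hmod k G :=
  HMod t
    (fun g => \matrix_(i < t, j < t) ((i == j)%:R * (chi g ^+ i * lam g)))
    (\matrix_(i < t, j < t) ((i == j.+1 :> nat)%:R)).

(* n-th tensor power M^{(x) n} (M^{(x) 0} = V_1(eps), the unit of r(W)). *)
Fixpoint Htpow (k : fieldType) (G : groupType) (chi : G -> k) (a : G)
  (M : Hmod k G) (n : nat) : Hmod k G :=
  if n is n'.+1 then Htens a M (Htpow chi a M n') else Vmod chi 1 (@eps k G).

(* Formal Z-linear combinations  sum_j c_j [M_j]  of classes in r(W). *)
Definition posmod (k : fieldType) (G : groupType) (s : seq (int * Hmod k G))
  : Hmod k G :=
  Hbig [seq Hmul (if (0 <= p.1)%R then absz p.1 else 0%N) p.2 | p <- s].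
Definition negmod (k : fieldType) (G : groupType) (s : seq (int * Hmod k G))
  : Hmod k G :=
  Hbig [seq Hmul (if (p.1 < 0)%R then absz p.1 else 0%N) p.2 | p <- s].

(* Equality in the Green ring r(W) (the abelian group on isoclasses of W
   modulo [U (+) V] = [U] + [V], i.e. the group completion of the monoid of
   isoclasses under (+)):  sum s = sum t  iff  s^+ (+) t^- (+) Z ~ t^+ (+) s^- (+) Z
   for some Z in W. *)
Definition green_eq (k : fieldType) (G : groupType) (chi : G -> k)
  (s t : seq (int * Hmod k G)) : Prop :=
  exists Z : Hmod k G, inW chi Z /\
    Hiso (Hsum (Hsum (posmod s) (negmod t)) Z)
         (Hsum (Hsum (posmod t) (negmod s)) Z).

(* Main.v *)
Require Import Defs.
From HB Require Import structures.
From mathcomp Require Import all_boot all_order all_algebra.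
From mathcomp Require Import mxtens.
From mathcomp Require Import ring zify.
Set Implicit Arguments.
Unset Strict Implicit.
Unset Printing Implicit Defensive.
Import Order.TTheory GRing.Theory Num.Theory.
Local Open Scope ring_scope.
Section Gen.
Variables (k : fieldType) (G : groupType).
Implicit Types M N L : Hmod k G.

Lemma Hiso_refl M : Hiso M M.
Proof. exists 1%:M, 1%:M; split; by [rewrite mulmx1|rewrite mulmx1|move=> g; rewrite mulmx1 mul1mx|rewrite mulmx1 mul1mx]. Qed.

Lemma Hiso_sym M N : Hiso M N -> Hiso N M.
Proof.
case=> P [Q [QP PQ Hr Hx]]; exists Q, P; split => //.
  by move=> g; rewrite -[Q *m _]mulmx1 -PQ !mulmxA -(mulmxA Q) -Hr mulmxA QP mul1mx.
by rewrite -[Q *m _]mulmx1 -PQ !mulmxA -(mulmxA Q) -Hx mulmxA QP mul1mx.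
Qed.

Lemma Hiso_trans M N L : Hiso M N -> Hiso N L -> Hiso M L.
Proof.
case=> P [Q [QP PQ Hr Hx]]; case=> P' [Q' [QP' PQ' Hr' Hx']].
exists (P' *m P), (Q *m Q'); split.
- by rewrite mulmxA -(mulmxA Q) QP' mulmx1 QP.
- by rewrite mulmxA -(mulmxA P') PQ mulmx1 PQ'.
- by move=> g; rewrite -mulmxA Hr mulmxA Hr' mulmxA.
- by rewrite -mulmxA Hx mulmxA Hx' mulmxA.
Qed.

Lemma sq_inv n1 n2 (e : n1 = n2) (P : 'M[k]_(n2, n1)) (Q : 'M[k]_(n1, n2)) :
  Q *m P = 1%:M -> P *m Q = 1%:M.
Proof. by move: P Q; case: n2 / e => P Q; apply: mulmx1C. Qed.

Lemma Hiso_sq M N (P : 'M[k]_(hdim N, hdim M)) (Q : 'M[k]_(hdim M, hdim N)) :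
  hdim M = hdim N -> Q *m P = 1%:M ->
  (forall g, P *m hrho M g = hrho N g *m P) -> P *m hx M = hx N *m P ->
  Hiso M N.
Proof. by move=> e QP Hr Hx; exists P, Q; split => //; apply: sq_inv e _ _ QP. Qed.

Lemma Hiso_eq n (r1 r2 : G -> 'M[k]_n) x1 x2 :
  (forall g, r1 g = r2 g) -> x1 = x2 -> Hiso (HMod n r1 x1) (HMod n r2 x2).
Proof.
move=> Hr <-; exists 1%:M, 1%:M; split=> /=; rewrite ?mulmx1 ?mul1mx //.
by move=> g; rewrite mulmx1 mul1mx Hr.
Qed.

Lemma Hiso_cast n1 n2 (e : n1 = n2) (r1 : G -> 'M[k]_n1) (r2 : G -> 'M[k]_n2) x1 x2 :
  (forall g, castmx (e, e) (r1 g) = r2 g) -> castmx (e, e) x1 = x2 ->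
  Hiso (HMod n1 r1 x1) (HMod n2 r2 x2).
Proof.
case: n2 / e r2 x2 => r2 x2 Hr Hx; apply: Hiso_eq => [g|]; rewrite -?Hr -?Hx castmx_id //.
Qed.

Lemma bdiag_mul m1 m2 n1 n2 p1 p2 (A : 'M[k]_(m1, n1)) (B : 'M[k]_(m2, n2))
  (C : 'M[k]_(n1, p1)) (D : 'M[k]_(n2, p2)) :
  block_mx A 0 0 B *m block_mx C 0 0 D = block_mx (A *m C) 0 0 (B *m D).
Proof. by rewrite mulmx_block !mulmx0 !mul0mx !addr0 !add0r. Qed.

Lemma Hsum_congr M M' N N' : Hiso M M' -> Hiso N N' -> Hiso (Hsum M N) (Hsum M' N').
Proof.
case=> P [Q [QP PQ Hr Hx]]; case=> P' [Q' [QP' PQ' Hr' Hx']].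
exists (block_mx P 0 0 P'), (block_mx Q 0 0 Q'); split => /=.
- by rewrite bdiag_mul QP QP' -scalar_mx_block.
- by rewrite bdiag_mul PQ PQ' -scalar_mx_block.
- by move=> g; rewrite !bdiag_mul Hr Hr'.
- by rewrite !bdiag_mul Hx Hx'.
Qed.

Lemma Hsum_comm M N : Hiso (Hsum M N) (Hsum N M).
Proof.
pose P : 'M[k]_(hdim N + hdim M, hdim M + hdim N) := block_mx 0 1%:M 1%:M 0.
pose Q : 'M[k]_(hdim M + hdim N, hdim N + hdim M) := block_mx 0 1%:M 1%:M 0.
exists P, Q; split => /=; rewrite /P /Q.
- by rewrite mulmx_block !mulmx0 !mul0mx !mulmx1 !addr0 !add0r -scalar_mx_block.
- by rewrite mulmx_block !mulmx0 !mul0mx !mulmx1 !addr0 !add0r -scalar_mx_block.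
- by move=> g; rewrite !mulmx_block !mulmx0 !mul0mx !mulmx1 !mul1mx !addr0 !add0r.
- by rewrite !mulmx_block !mulmx0 !mul0mx !mulmx1 !mul1mx !addr0 !add0r.
Qed.

Lemma Hsum_assoc M N L : Hiso (Hsum (Hsum M N) L) (Hsum M (Hsum N L)).
Proof.
case: M => m rm xm; case: N => n rn xn; case: L => l rl xl.
rewrite /Hsum /=. refine (@Hiso_cast _ _ (esym (addnA m n l)) _ _ _ _ _ _) => [g|].
  by have := @block_mxA _ _ _ _ _ _ _ (rm g) 0 0 0 (rn g) 0 0 0 (rl g); rewrite !row_mx0 !col_mx0 => ->.
by have := @block_mxA _ _ _ _ _ _ _ xm 0 0 0 xn 0 0 0 xl; rewrite !row_mx0 !col_mx0 => ->.
Qed.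
End Gen.
Section Gen2.
Variables (k : fieldType) (G : groupType).
Implicit Types M N L : Hmod k G.

Lemma block0_mx n (A : 'M[k]_(0,0)) (B : 'M[k]_(0, n)) (C : 'M[k]_(n, 0)) (D : 'M[k]_n) :
  block_mx A B C D = D.
Proof.
apply/matrixP => i j.
have Ei : i = rshift 0 i by apply: val_inj.
have Ej : j = rshift 0 j by apply: val_inj.
by rewrite {1}Ei {1}Ej block_mxEdr.
Qed.

Lemma Hsum0l M : Hiso (Hsum (Hzero k G) M) M.
Proof.
case: M => n r x; rewrite /Hsum /=.
by apply: Hiso_eq => [g|]; rewrite block0_mx.
Qed.

Lemma tens11 m n : (1%:M : 'M[k]_m) *t (1%:M : 'M[k]_n) = 1%:M.
Proof.
apply/matrixP => i j.
case: (mxtens_indexP i) => i1 i2; case: (mxtens_indexP j) => j1 j2.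
rewrite tensmxE !mxE -natrM; congr (_%:R).
rewrite (inj_eq (can_inj (@mxtens_indexK m n))) xpair_eqE.
by case: (i1 == j1); case: (i2 == j2).
Qed.

Lemma tensmxDr m n p q (A : 'M[k]_(m,n)) (B C : 'M[k]_(p,q)) :
  A *t (B + C) = A *t B + A *t C.
Proof. by apply/matrixP => i j; rewrite !mxE mulrDr. Qed.

Lemma tensmxDl m n p q (A B : 'M[k]_(m,n)) (C : 'M[k]_(p,q)) :
  (A + B) *t C = A *t C + B *t C.
Proof. by apply/matrixP => i j; rewrite !mxE mulrDl. Qed.

Lemma tensmxZr m n p q (A : 'M[k]_(m,n)) c (B : 'M[k]_(p,q)) :
  A *t (c *: B) = c *: (A *t B).
Proof. by apply/matrixP => i j; rewrite !mxE mulrCA. Qed.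

Lemma tensmxZl m n p q (A : 'M[k]_(m,n)) c (B : 'M[k]_(p,q)) :
  (c *: A) *t B = c *: (A *t B).
Proof. by apply/matrixP => i j; rewrite !mxE mulrA. Qed.

Variable a : G.

Lemma Htens_congr_r M N N' : Hiso N N' -> Hiso (Htens a M N) (Htens a M N').
Proof.
case=> P [Q [QP PQ Hr Hx]].
exists (1%:M *t P), (1%:M *t Q); split => /=.
- by rewrite tensmx_mul mulmx1 QP tens11.
- by rewrite tensmx_mul mulmx1 PQ tens11.
- by move=> g; rewrite !tensmx_mul mulmx1 mul1mx Hr.
- by rewrite mulmxDr mulmxDl !tensmx_mul !mulmx1 !mul1mx Hr Hx.
Qed.

Lemma Htens_zero_r M : Hiso (Htens a M (Hzero k G)) (Hzero k G).
Proof.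
rewrite /Htens /Hzero /=.
refine (@Hiso_cast _ _ _ _ (muln0 _) _ _ _ _ _ _) => [g|]; apply: flatmx0.
Qed.

Lemma Htens_sum_r M A B :
  Hiso (Htens a M (Hsum A B)) (Hsum (Htens a M A) (Htens a M B)).
Proof.
case: M => m rm xm; case: A => p ra xa; case: B => q rb xb.
rewrite /Htens /Hsum /=.
pose P : 'M[k]_(m * p + m * q, m * (p + q)) :=
  col_mx (1%:M *t row_mx 1%:M 0) (1%:M *t row_mx 0 1%:M).
pose Q : 'M[k]_(m * (p + q), m * p + m * q) :=
  row_mx (1%:M *t col_mx 1%:M 0) (1%:M *t col_mx 0 1%:M).
have key : forall (X : 'M[k]_m) (Y1 : 'M[k]_p) (Y2 : 'M[k]_q),
  P *m (X *t block_mx Y1 0 0 Y2) = block_mx (X *t Y1) 0 0 (X *t Y2) *m P.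
  move=> X Y1 Y2; rewrite /P mul_col_mx. rewrite (mul_block_col (X *t Y1)) !mul0mx addr0 add0r !tensmx_mul.
  rewrite !mul1mx mul_row_block mul_mx_row !mul1mx !mul0mx !mulmx1 !mulmx0 addr0 add0r.
  by rewrite mul_row_block mul_mx_row !mul0mx !mul1mx !mulmx0 !mulmx1 addr0 add0r.
refine (@Hiso_sq _ _ (HMod _ _ _) (HMod _ _ _) P Q _ _ _ _) => /=.
- by rewrite mulnDr.
- rewrite /P /Q mul_row_col !tensmx_mul !mulmx1 !mul_col_row !mulmx1 !mulmx0 ?mul0mx.
  by rewrite -tensmxDr add_block_mx !addr0 !add0r -scalar_mx_block tens11.
- by move=> g; apply: key.
- by rewrite mulmxDr !key -mulmxDl add_block_mx !addr0.
Qed.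

Definition Hscale (c : G -> k) M : Hmod k G :=
  HMod (hdim M) (fun g => c g *: hrho M g) (hx M).

Lemma Hscale_congr c M N : Hiso M N -> Hiso (Hscale c M) (Hscale c N).
Proof.
case=> P [Q [QP PQ Hr Hx]]; exists P, Q; split => //= g.
by rewrite -scalemxAl -scalemxAr Hr.
Qed.

Lemma Hscale_comp c d M :
  Hiso (Hscale c (Hscale d M)) (Hscale (fun g => c g * d g) M).
Proof. by apply: Hiso_eq => [g|] //; rewrite scalerA. Qed.

Lemma Hscale_ext c d M : (forall g, c g = d g) ->
  Hiso (Hscale c M) (Hscale d M).
Proof. by move=> E; apply: Hiso_eq => [g|] //; rewrite E. Qed.

Variable chi : G -> k.

Lemma V1_scalar (lam : G -> k) g :
  hrho (Vmod chi 1 lam) g = (lam g)%:M.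
Proof.
apply/matrixP => i j; rewrite !ord1 !mxE /= expr0 mul1r.
by rewrite mul1r mulr1n.
Qed.

Lemma V1_x (lam : G -> k) : hx (Vmod chi 1 lam) = 0.
Proof. by apply/matrixP => i j; rewrite !ord1 !mxE. Qed.

Lemma Htens_V1 lam M : Hiso (Htens a (Vmod chi 1 lam) M) (Hscale lam M).
Proof.
case: M => n r x; rewrite /Htens /Hscale.
refine (@Hiso_cast _ _ _ _ (mul1n n) _ _ _ _ _ _) => [g|].
  by rewrite V1_scalar tens_scalar_mx castmx_comp castmx_id.
rewrite V1_x tens0mx add0r /=.
by rewrite -[1%:M]/((1:k)%:M : 'M_1) tens_scalar_mx castmx_comp castmx_id scale1r.
Qed.

End Gen2.
Section Twist.
Variables (k : fieldType) (G : groupType) (a : G) (chi : G -> k).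
Implicit Types M N L : Hmod k G.

Local Notation V2 := (Vmod chi 2 (@eps k G)).

Ltac ord2 i := case: i => [[|[|?]]] ? //.

Lemma twist (c : G -> k) M : c a != 0 ->
  Hiso (Htens a V2 (Hscale c M)) (Hscale c (Htens a V2 M)).
Proof.
move=> ca0.
pose D : 'M[k]_2 := \matrix_(i, j) ((i == j)%:R * (if i == 0 :> nat then c a else 1)).
pose Di : 'M[k]_2 := \matrix_(i, j) ((i == j)%:R * (if i == 0 :> nat then (c a)^-1 else 1)).
have DiD : Di *m D = 1%:M.
  apply/matrixP => i j; rewrite !mxE !big_ord_recl !big_ord0 !mxE /=.
  by ord2 i; ord2 j; rewrite /=; try ring; field.
have Drho : forall g, D *m hrho V2 g = hrho V2 g *m D.
  move=> g; apply/matrixP => i j; rewrite !mxE !big_ord_recl !big_ord0 !mxE /=.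
  by ord2 i; ord2 j; rewrite /=; ring.
have Dx : c a *: (D *m hx V2) = hx V2 *m D.
  apply/matrixP => i j; rewrite !mxE !big_ord_recl !big_ord0 !mxE /=.
  by ord2 i; ord2 j; rewrite /=; ring.
case: M => n r x.
refine (@Hiso_sq _ _ (HMod _ _ _) (HMod _ _ _) (D *t 1%:M) (Di *t 1%:M) _ _ _ _) => //=.
- by rewrite tensmx_mul DiD mulmx1 tens11.
- move=> g; rewrite -[in RHS]scalemxAl !tensmx_mul mulmx1 mul1mx tensmxZr.
  by rewrite [_ *m D]/= -Drho.
- rewrite mulmxDr mulmxDl !tensmx_mul !mulmx1 !mul1mx tensmxZr -tensmxZl.
  by congr (_ *t _ + _); exact: Dx.
Qed.

Lemma Vchi_scale n : Hiso (Vmod chi n (charpow chi 1)) (Hscale (charpow chi 1) (Vmod chi n (@eps k G))).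
Proof.
apply: Hiso_eq => [g|] //; apply/matrixP => i j; rewrite !mxE /charpow /eps.
ring.
Qed.

End Twist.
Section BV.
Variable k : fieldType.

Definition bv n (j : nat) : 'cV[k]_n := \col_(i < n) ((i : nat) == j)%:R.

Definition tv m n (u : 'cV[k]_m) (v : 'cV[k]_n) : 'cV[k]_(m * n) := u *t v.

Lemma bv0 n j : (n <= j)%N -> bv n j = 0.
Proof.
move=> hj; apply/colP => i; rewrite !mxE.
by rewrite (_ : (i == j :> nat) = false) //; apply/negbTE; rewrite neq_ltn (leq_trans (ltn_ord i) hj).
Qed.

Lemma mul_bv_ord p q (A : 'M[k]_(q, p)) (j : 'I_p) : A *m bv p j = col j A.
Proof.
apply/colP => i; rewrite !mxE (bigD1 j) //= big1 ?addr0 => [|l hl]; rewrite !mxE ?eqxx ?mulr1 //.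
by rewrite (_ : (l == j :> nat) = false) ?mulr0 //; apply/negbTE.
Qed.

Lemma mul_mat_bv p q (F : 'I_q -> nat -> k) j :
  (\matrix_(i < q, l < p) F i l) *m bv p j = \col_i ((j < p)%:R * F i j).
Proof.
apply/colP => i; rewrite !mxE; case: (ltnP j p) => hj.
  rewrite (bigD1 (Ordinal hj)) //= big1 ?addr0 => [|l hl]; rewrite !mxE ?eqxx ?mulr1 ?mul1r //.
  by rewrite (_ : (l == j :> nat) = false) ?mulr0 //; apply/negbTE; apply: contra hl => /eqP h; apply/eqP/val_inj.
rewrite mul0r big1 // => l _; rewrite !mxE.
by rewrite (_ : (l == j :> nat) = false) ?mulr0 //; apply/negbTE; rewrite neq_ltn (leq_trans (ltn_ord l) hj).
Qed.

Lemma colE p q (A B : 'M[k]_(q, p)) : (forall j : 'I_p, A *m bv p j = B *m bv p j) -> A = B.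
Proof.
move=> H; apply/matrixP => i j; have := congr1 (fun v : 'cV_q => v i 0) (H j).
by rewrite !mul_bv_ord !mxE.
Qed.

Lemma bv_lshift m n (i : 'I_m) : bv (m + n) (lshift n i) = col_mx (bv m i) 0.
Proof.
apply/colP => l; rewrite !mxE; case: splitP => [l' ->|l' ->]; rewrite !mxE //=.
by case: eqP => // h; move: (ltn_ord i); lia.
Qed.

Lemma bv_rshift m n (i : 'I_n) : bv (m + n) (rshift m i) = col_mx 0 (bv n i).
Proof.
apply/colP => l; rewrite !mxE; case: splitP => [l' ->|l' ->]; rewrite !mxE //=.
  by case: eqP => // h; move: (ltn_ord l'); lia.
by rewrite eqn_add2l.
Qed.

Lemma bv_tens m n (i : 'I_m) (j : 'I_n) :
  bv (m * n) (mxtens_index (i, j)) = tv (bv m i) (bv n j).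
Proof.
apply/matrixP => l c; case: (mxtens_indexP l) => l1 l2.
rewrite /tv !mxE mxtens_indexK /= -natrM; congr (_%:R).
have -> : (mxtens_index (l1, l2) == mxtens_index (i, j) :> nat) = (mxtens_index (l1, l2) == mxtens_index (i, j)) by [].
rewrite (inj_eq (can_inj (@mxtens_indexK m n))) xpair_eqE.
by rewrite mulnb.
Qed.

Lemma colE_sum p q r (A B : 'M[k]_(r, p + q)) :
  (forall i : 'I_p, A *m col_mx (bv p i) 0 = B *m col_mx (bv p i) 0) ->
  (forall i : 'I_q, A *m col_mx 0 (bv q i) = B *m col_mx 0 (bv q i)) -> A = B.
Proof.
move=> H1 H2; apply: colE => j; rewrite -(splitK j); case: (split j) => i /=.
  by rewrite bv_lshift.
by rewrite bv_rshift.
Qed.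

Lemma colE_tens p q r (A B : 'M[k]_(r, p * q)) :
  (forall (i : 'I_p) (j : 'I_q), A *m tv (bv p i) (bv q j) = B *m tv (bv p i) (bv q j)) -> A = B.
Proof.
move=> H; apply: colE => l; case: (mxtens_indexP l) => i j; rewrite bv_tens; exact: H.
Qed.

Lemma tv_mul m n p q (A : 'M[k]_(p, m)) (B : 'M[k]_(q, n)) u v :
  (A *t B) *m tv u v = tv (A *m u) (B *m v).
Proof. exact: (tensmx_mul A B u v). Qed.

Lemma tvDl m n (u u' : 'cV[k]_m) (v : 'cV[k]_n) : tv (u + u') v = tv u v + tv u' v.
Proof. exact: (tensmxDl u u' v). Qed.
Lemma tvDr m n (u : 'cV[k]_m) (v v' : 'cV[k]_n) : tv u (v + v') = tv u v + tv u v'.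
Proof. exact: (tensmxDr u v v'). Qed.
Lemma tvZl m n c (u : 'cV[k]_m) (v : 'cV[k]_n) : tv (c *: u) v = c *: tv u v.
Proof. exact: (tensmxZl u c v). Qed.
Lemma tvZr m n c (u : 'cV[k]_m) (v : 'cV[k]_n) : tv u (c *: v) = c *: tv u v.
Proof. exact: (tensmxZr u c v). Qed.
Lemma tv0l m n (v : 'cV[k]_n) : tv (0 : 'cV[k]_m) v = 0.
Proof. exact: (@tens0mx k m 1 n 1 v). Qed.
Lemma tv0r m n (u : 'cV[k]_m) : tv u (0 : 'cV[k]_n) = 0.
Proof. exact: (@tensmx0 k m 1 n 1 u). Qed.

End BV.

Section VmodBV.
Variables (k : fieldType) (G : groupType) (chi : G -> k).

Lemma Vx_bv t lam j : hx (Vmod chi t lam) *m bv k t j = bv k t j.+1.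
Proof.
rewrite /= (@mul_mat_bv _ _ _ (fun (i : 'I_t) l => ((i : nat) == l.+1)%:R)); apply/colP => i; rewrite !mxE.
case: (ltnP j t) => hj; rewrite ?mul1r ?mul0r //.
by rewrite (_ : (i == j.+1 :> nat) = false) //; apply/negbTE; rewrite neq_ltn (leq_trans (ltn_ord i)) // ltnW.
Qed.

Lemma Vrho_bv t lam g j : hrho (Vmod chi t lam) g *m bv k t j = (chi g ^+ j * lam g) *: bv k t j.
Proof.
rewrite /= (@mul_mat_bv _ _ _ (fun (i : 'I_t) l => ((i : nat) == l)%:R * (chi g ^+ i * lam g))); apply/colP => i; rewrite !mxE.
case: (ltnP j t) => hj; rewrite ?mul1r ?mul0r.
  by case: eqP => [->|]; rewrite ?mulr1 ?mul1r ?mulr0 ?mul0r.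
by rewrite (_ : (i == j :> nat) = false) ?mulr0 //; apply/negbTE; rewrite neq_ltn (leq_trans (ltn_ord i)).
Qed.

End VmodBV.
Section CG.
Variables (k : fieldType) (G : groupType) (a : G) (chi : G -> k) (n : nat).
Hypothesis ht : chi a ^+ n.+1 != 1.

Local Notation t := (chi a).
Definition qn (j : nat) : k := \sum_(i < j) t ^+ i.
Local Notation D := (qn n.+1).
Definition beta (r : nat) : k := t * (qn r - qn n).

Lemma qn0 : qn 0 = 0. Proof. by rewrite /qn big_ord0. Qed.
Lemma qnS j : qn j.+1 = qn j + t ^+ j. Proof. by rewrite /qn big_ord_recr. Qed.
Lemma qnS' j : qn j.+1 = 1 + t * qn j.
Proof. by rewrite /qn big_ord_recl expr0 mulr_sumr; congr (_ + _); apply: eq_bigr => i _; rewrite exprS. Qed.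

Lemma D_neq0 : D != 0.
Proof.
apply: contra ht => /eqP hD; rewrite -subr_eq0 subrX1.
by rewrite -/(qn n.+1) hD mulr0.
Qed.

Definition Wl j : 'cV[k]_(2 * n.+1) :=
  tv (bv k 2 0) (bv k n.+1 j) + qn j *: tv (bv k 2 1) (bv k n.+1 j.-1).
Definition Wr r : 'cV[k]_(2 * n.+1) :=
  tv (bv k 2 0) (bv k n.+1 r.+1) + beta r *: tv (bv k 2 1) (bv k n.+1 r).

Definition Rl : 'M[k]_(2 * n.+1, n.+2) := \matrix_(i, j) Wl j i 0.
Definition Rr : 'M[k]_(2 * n.+1, n) := \matrix_(i, j) Wr j i 0.
Definition RR : 'M[k]_(2 * n.+1, n.+2 + n) := row_mx Rl Rr.

Lemma Wl_out j : (n.+2 <= j)%N -> Wl j = 0.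
Proof.
move=> hj; rewrite /Wl (@bv0 _ n.+1 j) ?(@bv0 _ n.+1 j.-1) ?tv0r ?scaler0 ?addr0 //; lia.
Qed.

Lemma Wr_out r : (n <= r)%N -> Wr r = 0.
Proof.
move=> hr; rewrite /Wr (bv0 _ (_ : n.+1 <= r.+1)%N) // tv0r add0r.
case: (ltnP n r) => h; first by rewrite (@bv0 _ n.+1 r) ?tv0r ?scaler0.
have -> : r = n by apply/eqP; rewrite eqn_leq hr h.
by rewrite /beta subrr mulr0 scale0r.
Qed.

Lemma RR_l j : RR *m col_mx (bv k n.+2 j) 0 = Wl j.
Proof.
rewrite mul_row_col mulmx0 addr0 /Rl (@mul_mat_bv _ _ _ (fun i j => Wl j i 0)).
apply/colP => i; rewrite mxE; case: (ltnP j n.+2) => hj; first by rewrite mul1r.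
by rewrite Wl_out // mxE mulr0.
Qed.

Lemma RR_r r : RR *m col_mx 0 (bv k n r) = Wr r.
Proof.
rewrite mul_row_col mulmx0 add0r /Rr (@mul_mat_bv _ _ _ (fun i j => Wr j i 0)).
apply/colP => i; rewrite mxE; case: (ltnP r n) => hj; first by rewrite mul1r.
by rewrite Wr_out // mxE mulr0.
Qed.

Definition Sform0 j : 'cV[k]_(n.+2 + n) :=
  (1 - qn j / D) *: col_mx (bv k n.+2 j) 0 + (qn j / D) *: col_mx 0 (bv k n j.-1).
Definition Sform1 j : 'cV[k]_(n.+2 + n) :=
  D^-1 *: (col_mx (bv k n.+2 j.+1) 0 - col_mx 0 (bv k n j)).

Definition Sfun (p : 'I_2 * 'I_n.+1) := if p.1 == 0 :> nat then Sform0 p.2 else Sform1 p.2.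
Definition SS : 'M[k]_(n.+2 + n, 2 * n.+1) := \matrix_(i, u) Sfun (mxtens_unindex u) i 0.

Lemma SS_0 j : SS *m tv (bv k 2 0) (bv k n.+1 j) = Sform0 j.
Proof.
case: (ltnP j n.+1) => hj.
  rewrite -(bv_tens k (ord0 : 'I_2) (Ordinal hj)) mul_bv_ord; apply/colP => i.
  by rewrite 2!mxE mxtens_indexK.
rewrite (@bv0 _ n.+1 j) // tv0r mulmx0 /Sform0.
case: (ltnP n.+1 j) => h.
  by rewrite !bv0 ?col_mx0 ?scaler0 ?addr0 //; case: j hj h => //= j; lia.
have -> : j = n.+1 by apply/eqP; rewrite eqn_leq h hj.
by rewrite divff ?D_neq0 // subrr scale0r add0r /= bv0 // col_mx0 scaler0.
Qed.

Lemma SS_1 j : SS *m tv (bv k 2 1) (bv k n.+1 j) = Sform1 j.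
Proof.
case: (ltnP j n.+1) => hj.
  rewrite -(bv_tens k (Ordinal (isT : 1 < 2)%N) (Ordinal hj)) mul_bv_ord; apply/colP => i.
  by rewrite 2!mxE mxtens_indexK.
by rewrite (@bv0 _ n.+1 j) // tv0r mulmx0 /Sform1 (@bv0 _ n.+2) ?(@bv0 _ n j) ?col_mx0 ?subrr ?scaler0 //; lia.
Qed.

Lemma SR : SS *m RR = 1%:M.
Proof.
apply: colE_sum => [i|r].
  rewrite -mulmxA RR_l mul1mx /Wl mulmxDr -scalemxAr SS_0 SS_1 /Sform0 /Sform1.
  case: i => [[|i]] hi /=.
    by rewrite qn0 mul0r subr0 scale1r !scale0r !addr0.
  apply/matrixP => x y; rewrite !mxE; ring.
rewrite -mulmxA RR_r mul1mx /Wr mulmxDr -scalemxAr SS_0 SS_1 /Sform0 /Sform1 /=.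
rewrite /beta !qnS'.
have hD : 1 + t * qn n != 0 by rewrite -qnS' D_neq0.
apply/matrixP => x y; rewrite !mxE; field.
done.
Qed.


Lemma Hsum_rho (M N : Hmod k G) g : hrho (Hsum M N) g = block_mx (hrho M g) 0 0 (hrho N g).
Proof. by []. Qed.
Lemma Hsum_x (M N : Hmod k G) : hx (Hsum M N) = block_mx (hx M) 0 0 (hx N).
Proof. by []. Qed.
Lemma Htens_rho (M N : Hmod k G) g : hrho (Htens a M N) g = hrho M g *t hrho N g.
Proof. by []. Qed.
Lemma Htens_x (M N : Hmod k G) : hx (Htens a M N) = hx M *t hrho N a + 1%:M *t hx N.
Proof. by []. Qed.

Lemma bcol p q r (A : 'M[k]_p) (B : 'M[k]_q) (u : 'M[k]_(p, r)) (v : 'M[k]_(q, r)) :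
  block_mx A 0 0 B *m col_mx u v = col_mx (A *m u) (B *m v).
Proof. by rewrite mul_block_col !mul0mx addr0 add0r. Qed.

Lemma colZl p q r c (u : 'M[k]_(p, r)) : col_mx (c *: u) (0 : 'M_(q, r)) = c *: col_mx u 0.
Proof. by rewrite scale_col_mx scaler0. Qed.
Lemma colZr p q r c (u : 'M[k]_(q, r)) : col_mx (0 : 'M_(p, r)) (c *: u) = c *: col_mx 0 u.
Proof. by rewrite scale_col_mx scaler0. Qed.

Local Notation V2 := (Vmod chi 2 (@eps k G)).
Local Notation NN := (Hsum (Vmod chi n.+2 (@eps k G)) (Vmod chi n (charpow chi 1))).
Local Notation MM := (Htens a V2 (Vmod chi n.+1 (@eps k G))).

Lemma CG_rho g : RR *m hrho NN g = hrho MM g *m RR.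
Proof.
apply: colE_sum => [i|r]; rewrite -!mulmxA Hsum_rho bcol mulmx0.
  rewrite Vrho_bv colZl -scalemxAr !RR_l Htens_rho /Wl mulmxDr -scalemxAr !tv_mul.
  rewrite !Vrho_bv !tvZl !tvZr /eps.
  case: i => [[|i]] hi /=; first by rewrite qn0 !scale0r !addr0 !expr0 !mulr1 !scale1r.
  apply/matrixP => x y; rewrite !mxE !exprS expr0; ring.
rewrite Vrho_bv colZr -scalemxAr !RR_r Htens_rho /Wr mulmxDr -scalemxAr !tv_mul.
rewrite !Vrho_bv !tvZl !tvZr /eps /charpow.
apply/matrixP => x y; rewrite !mxE !exprS expr0; ring.
Qed.

Lemma x2_bv0 : hx V2 *m bv k 2 0 = bv k 2 1.
Proof. exact: Vx_bv. Qed.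
Lemma x2_bv1 : hx V2 *m bv k 2 1 = 0.
Proof. by rewrite Vx_bv bv0. Qed.

Lemma CG_x : RR *m hx NN = hx MM *m RR.
Proof.
apply: colE_sum => [i|r]; rewrite -!mulmxA Hsum_x bcol mulmx0.
  rewrite Vx_bv !RR_l Htens_x /Wl mulmxDr -scalemxAr !mulmxDl !tv_mul.
  rewrite x2_bv0 x2_bv1 !mul1mx !Vx_bv !Vrho_bv tv0l add0r !tvZr /eps.
  case: i => [[|i]] hi /=.
    rewrite qn0 !scale0r !addr0 /Wl /= qnS qn0 expr0 !mulr1 add0r scale1r.
    by rewrite addrC.
  rewrite /Wl /= qnS.
  apply/matrixP => x y; rewrite !mxE; ring.
rewrite Vx_bv !RR_r Htens_x /Wr mulmxDr -scalemxAr !mulmxDl !tv_mul.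
rewrite x2_bv0 x2_bv1 !mul1mx !Vx_bv !Vrho_bv tv0l add0r !tvZr /eps /beta qnS.
apply/matrixP => x y; rewrite !mxE !exprS; ring.
Qed.

Lemma CG : Hiso NN MM.
Proof.
refine (@Hiso_sq _ _ NN MM RR SS _ SR CG_rho CG_x).
rewrite /=; lia.
Qed.

End CG.
Section Lists.
Variables (k : fieldType) (G : groupType).
Implicit Types M N L : Hmod k G.

Lemma Hsum_swap (A B C : Hmod k G) : Hiso (Hsum A (Hsum B C)) (Hsum B (Hsum A C)).
Proof.
apply: Hiso_trans (Hiso_sym (Hsum_assoc A B C)) _.
apply: Hiso_trans (Hsum_assoc B A C).
exact: Hsum_congr (Hsum_comm A B) (Hiso_refl C).
Qed.

Lemma Hsum0r M : Hiso (Hsum M (Hzero k G)) M.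
Proof. exact: Hiso_trans (Hsum_comm M (Hzero k G)) (Hsum0l M). Qed.

Lemma Hbig_cat (l1 l2 : seq (Hmod k G)) :
  Hiso (Hbig (l1 ++ l2)) (Hsum (Hbig l1) (Hbig l2)).
Proof.
elim: l1 => [|x l1 IH] /=; first exact: Hiso_sym (Hsum0l (Hbig l2)).
apply: Hiso_trans (Hsum_congr (Hiso_refl x) IH) _.
exact: Hiso_sym (Hsum_assoc x (Hbig l1) (Hbig l2)).
Qed.

Lemma Hbig_insert y (l1 l2 : seq (Hmod k G)) :
  Hiso (Hsum y (Hbig (l1 ++ l2))) (Hbig (l1 ++ y :: l2)).
Proof.
elim: l1 => [|x l1 IH] /=; first exact: Hiso_refl.
apply: Hiso_trans (Hsum_swap y x (Hbig (l1 ++ l2))) _.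
exact: Hsum_congr (Hiso_refl x) IH.
Qed.

Lemma Hbig_perm (T : eqType) (f : T -> Hmod k G) (s1 s2 : seq T) :
  perm_eq s1 s2 -> Hiso (Hbig (map f s1)) (Hbig (map f s2)).
Proof.
elim: s1 s2 => [|x s1 IH] s2 hp.
  by move/perm_size: hp; case: s2 => // _; apply: Hiso_refl.
have hx : x \in s2 by rewrite -(perm_mem hp) mem_head.
case/splitPr: hx hp => s2a s2b hp.
have hp' : perm_eq s1 (s2a ++ s2b).
  rewrite -(perm_cons x); apply: (perm_trans hp).
  by rewrite -[x :: s2b]/([:: x] ++ s2b) perm_catCA.
rewrite /= map_cat /=; apply: Hiso_trans (Hsum_congr (Hiso_refl (f x)) (IH _ hp')) _.
rewrite map_cat; exact: Hbig_insert.
Qed.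

Lemma Hmul_big c M : Hmul c M = Hbig (nseq c M).
Proof. by elim: c => //= c ->. Qed.

Lemma Hbig_mul (T : Type) (W : T -> Hmod k G) (f : nat -> nat) (g : nat -> T) (s : seq nat) :
  Hiso (Hbig [seq Hmul (f i) (W (g i)) | i <- s])
       (Hbig (map W (flatten [seq nseq (f i) (g i) | i <- s]))).
Proof.
elim: s => [|x s IH] /=; first exact: Hiso_refl.
rewrite map_cat; apply: Hiso_trans _ (Hiso_sym (Hbig_cat _ _)).
by rewrite map_nseq Hmul_big; apply: Hsum_congr (Hiso_refl _) IH.
Qed.

End Lists.
Section Count.
Local Open Scope nat_scope.

Definition Lf n (b : bool) : seq (nat * nat) :=
  flatten [seq nseq (if odd i == b then 'C(n - i, i) else 0) (i, n - i.*2) | i <- iota 0 n./2.+1].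
Definition cnt n (b : bool) (x : nat * nat) : nat :=
  if (odd x.1 == b) && (x.1.*2 + x.2 == n) then 'C(n - x.1, x.1) else 0.
Definition ysh (c : nat * nat) := (c.1, c.2.+1).
Definition csh (c : nat * nat) := (c.1.+1, c.2).

Lemma sum_nat1 (F : nat -> nat) j N : (forall i, i != j -> F i = 0) ->
  sumn [seq F i | i <- iota 0 N] = if (j < N)%N then F j else 0.
Proof.
move=> H; elim: N => [|N IH] //.
rewrite -addn1 iotaD map_cat sumn_cat IH /= add0n addn0.
case: (ltngtP j N) => h.
- have hN : N != j by rewrite neq_ltn h orbT.
  by rewrite (ltn_addr _ h) (H _ hN) addn0.
- have hN : N != j by rewrite neq_ltn h.
  rewrite (H _ hN) addn0 (_ : (j < N + 1) = false) //; lia.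
- by subst j; rewrite add0n addn1 ltnSn.
Qed.

Lemma count_Lf n b x : count_mem x (Lf n b) = cnt n b x.
Proof.
rewrite /Lf count_flatten -map_comp.
rewrite (eq_map (g := fun i => ((i, n - i.*2) == x) * (if odd i == b then 'C(n - i, i) else 0))%N); last first.
  by move=> i /=; rewrite count_nseq.
rewrite (@sum_nat1 _ x.1); last first.
  by move=> i hi; rewrite (_ : (i, n - i.*2) == x = false) //; apply/negbTE; apply: contra hi => /eqP <-.
case: x => i j /=; rewrite /cnt /=.
case: (ltnP i n./2.+1) => h.
  rewrite xpair_eqE eqxx /=.
  have -> : (n - i.*2 == j) = (i.*2 + j == n) by apply/idP/idP => /eqP h'; apply/eqP; lia.
  by case: (odd i == b); case: (i.*2 + j == n); rewrite ?mul1n ?mul0n ?andbF.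
by rewrite (_ : (i.*2 + j == n) = false) ?andbF //; apply/negbTE/eqP; lia.
Qed.

Lemma count_ysh (L : seq (nat * nat)) x :
  count_mem x (map ysh L) = if x.2 is j.+1 then count_mem (x.1, j) L else 0.
Proof.
rewrite count_map; case: x => i [|j] /=.
  by apply/eqP; rewrite -leqn0 leqNgt -has_count; apply/hasPn => -[y1 y2] _ /=; rewrite /ysh /= xpair_eqE andbF.
by apply: eq_count => -[y1 y2]; rewrite /ysh /= !xpair_eqE eqSS.
Qed.

Lemma count_csh (L : seq (nat * nat)) x :
  count_mem x (map csh L) = if x.1 is i.+1 then count_mem (i, x.2) L else 0.
Proof.
rewrite count_map; case: x => [[|i] j] /=.
  by apply/eqP; rewrite -leqn0 leqNgt -has_count; apply/hasPn => -[y1 y2] _ /=.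
by apply: eq_count => -[y1 y2]; rewrite /csh /= !xpair_eqE eqSS.
Qed.

Lemma Lf_step n b : perm_eq (Lf n.+2 b) (map ysh (Lf n.+1 b) ++ map csh (Lf n (~~ b))).
Proof.
rewrite /perm_eq; apply/allP => x _ /=; apply/eqP.
rewrite count_cat count_ysh count_csh !count_Lf.
have oddE : forall i, (~~ odd i == b) = (odd i == ~~ b) by move=> i; case: (odd i); case: b.
case: x => [[|i] [|j]] /=; rewrite ?count_Lf /cnt /=.
- by rewrite andbF.
- by rewrite !bin0 addn0.
- rewrite add0n oddE (_ : (i.+1.*2 + 0 == n.+2) = (i.*2 + 0 == n)); last first.
    by apply/idP/idP => /eqP h; apply/eqP; lia.
  case E: (i.*2 + 0 == n); rewrite ?andbT ?andbF //; move/eqP: E => E.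
  case: (odd i == ~~ b) => //.
  have -> : n.+2 - i.+1 = i.+1 by lia.
  have -> : n - i = i by lia.
  by rewrite !binn.
- rewrite oddE (_ : (i.+1.*2 + j.+1 == n.+2) = (i.*2 + j.+1 == n)); last first.
    by apply/idP/idP => /eqP h; apply/eqP; lia.
  rewrite (_ : (i.+1.*2 + j == n.+1) = (i.*2 + j.+1 == n)); last first.
    by apply/idP/idP => /eqP h; apply/eqP; lia.
  case: (odd i == ~~ b) => //=.
  case E: (i.*2 + j.+1 == n) => //; move/eqP: E => E.
  have -> : n.+2 - i.+1 = (n - i).+1 by lia.
  have -> : n.+1 - i.+1 = n - i by lia.
  by rewrite binS addnC.
Qed.

End Count.
Section Main.
Variables (k : fieldType) (G : groupType) (a : G) (chi : G -> k).
Hypothesis chi_a0 : chi a != 0.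
Hypothesis ht : forall n, chi a ^+ n.+1 != 1.

Local Notation V2 := (Vmod chi 2 (@eps k G)).
Local Notation C1 := (Vmod chi 1 (charpow chi 1)).

Definition Wm (c : nat * nat) : Hmod k G :=
  Htens a (Vmod chi 1 (charpow chi c.1)) (Htpow chi a V2 c.2).
Definition BB (L : seq (nat * nat)) := Hbig (map Wm L).

Lemma Htens_unit_r (M : Hmod k G) : Hiso (Htens a M (Vmod chi 1 (@eps k G))) M.
Proof.
case: M => m r x; rewrite /Htens.
refine (@Hiso_cast _ _ _ _ (muln1 m) _ _ _ _ _ _) => [g|].
  by rewrite V1_scalar tens_mx_scalar castmx_comp castmx_id /eps scale1r.
by rewrite V1_scalar V1_x tensmx0 addr0 tens_mx_scalar castmx_comp castmx_id /eps scale1r.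
Qed.

Lemma Hscale0 (M : Hmod k G) : Hiso (Hscale (charpow chi 0) M) M.
Proof. by case: M => m r x; apply: Hiso_eq => [g|] //; rewrite /charpow expr0 scale1r. Qed.

Lemma ystep c : Hiso (Htens a V2 (Wm c)) (Wm (ysh c)).
Proof.
case: c => i j; rewrite /Wm /ysh /=.
eapply Hiso_trans; first by apply: Htens_congr_r; apply: Htens_V1.
eapply Hiso_trans; first by apply: twist; rewrite /charpow expf_neq0.
exact: Hiso_sym (Htens_V1 _ _ _ _).
Qed.

Lemma cstep c : Hiso (Htens a C1 (Wm c)) (Wm (csh c)).
Proof.
case: c => i j; rewrite /Wm /csh /=.
eapply Hiso_trans; first exact: Htens_V1.
eapply Hiso_trans; first by apply: Hscale_congr; apply: Htens_V1.
eapply Hiso_trans; first exact: Hscale_comp.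
eapply Hiso_trans; first by apply: (@Hscale_ext _ _ _ (charpow chi i.+1)) => g; rewrite /charpow expr1 exprS.
exact: Hiso_sym (Htens_V1 _ _ _ _).
Qed.

Lemma BB_y L : Hiso (Htens a V2 (BB L)) (BB (map ysh L)).
Proof.
elim: L => [|c L IH] /=; first exact: Htens_zero_r.
eapply Hiso_trans; first exact: Htens_sum_r.
exact: Hsum_congr (ystep c) IH.
Qed.

Lemma BB_c L : Hiso (Htens a C1 (BB L)) (BB (map csh L)).
Proof.
elim: L => [|c L IH] /=; first exact: Htens_zero_r.
eapply Hiso_trans; first exact: Htens_sum_r.
exact: Hsum_congr (cstep c) IH.
Qed.

Lemma BB_cat L1 L2 : Hiso (BB (L1 ++ L2)) (Hsum (BB L1) (BB L2)).
Proof. by rewrite /BB map_cat; apply: Hbig_cat. Qed.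

Lemma BB_perm L1 L2 : perm_eq L1 L2 -> Hiso (BB L1) (BB L2).
Proof. exact: Hbig_perm. Qed.

Definition Qn n := Hiso (Hsum (Vmod chi n.+1 (@eps k G)) (BB (Lf n true))) (BB (Lf n false)).

Lemma Q0 : Qn 0.
Proof.
rewrite /Qn /Lf /=; apply: Hsum_congr (Hiso_refl _).
rewrite /Wm /=.
apply: Hiso_sym; eapply Hiso_trans; first exact: Htens_V1.
exact: Hscale0.
Qed.

Lemma Q1 : Qn 1.
Proof.
rewrite /Qn /Lf /=; apply: Hsum_congr (Hiso_refl _).
rewrite /Wm /=.
apply: Hiso_sym; eapply Hiso_trans; first exact: Htens_V1.
eapply Hiso_trans; first exact: Hscale0.
exact: Htens_unit_r.
Qed.

Lemma Qstep n : Qn n -> Qn n.+1 -> Qn n.+2.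
Proof.
rewrite /Qn => H0 H1.
set O2 := Lf n.+2 true; set E2 := Lf n.+2 false.
set O1 := Lf n.+1 true; set E1 := Lf n.+1 false.
set O0 := Lf n true; set E0 := Lf n false.
have A : Hiso (Hsum (Hsum (Vmod chi n.+3 (@eps k G)) (Vmod chi n.+1 (charpow chi 1)))
                    (BB (map ysh O1))) (BB (map ysh E1)).
  apply: Hiso_trans (BB_y _).
  apply: Hiso_trans (Htens_congr_r a V2 H1).
  apply: Hiso_sym; eapply Hiso_trans; first exact: Htens_sum_r.
  apply: Hsum_congr (BB_y _).
  apply: Hiso_sym; apply: CG; exact: ht.
have B : Hiso (Hsum (Vmod chi n.+1 (charpow chi 1)) (BB (map csh O0))) (BB (map csh E0)).
  apply: Hiso_trans (BB_c _).
  apply: Hiso_trans (Htens_congr_r a C1 H0).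
  apply: Hiso_sym; eapply Hiso_trans; first exact: Htens_sum_r.
  apply: Hsum_congr (BB_c _).
  eapply Hiso_trans; first exact: Htens_V1.
  exact: Hiso_sym (Vchi_scale chi n.+1).
eapply Hiso_trans; last exact: (Hiso_sym (BB_perm (Lf_step n false))).
eapply Hiso_trans; last exact: (Hiso_sym (BB_cat _ _)).
eapply Hiso_trans; first apply: Hsum_congr (Hiso_refl _) (BB_perm (Lf_step n true)).
eapply Hiso_trans; first apply: Hsum_congr (Hiso_refl _) (BB_cat _ _).
eapply Hiso_trans; first apply: Hsum_congr (Hiso_refl _) (Hsum_congr (Hiso_refl _) (Hiso_sym B)).
eapply Hiso_trans; first apply: Hsum_congr (Hiso_refl _) (Hiso_sym (Hsum_assoc _ _ _)).
eapply Hiso_trans; first apply: Hiso_sym (Hsum_assoc _ _ _).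
eapply Hiso_trans; first apply: Hsum_congr (Hsum_congr (Hiso_refl _) (Hsum_comm _ _)) (Hiso_refl _).
eapply Hiso_trans; first apply: Hsum_congr (Hiso_sym (Hsum_assoc _ _ _)) (Hiso_refl _).
exact: Hsum_congr A (Hiso_refl _).
Qed.

Lemma Qall n : Qn n.
Proof.
suff : Qn n /\ Qn n.+1 by case.
elim: n => [|n [IH0 IH1]]; first by split; [exact: Q0 | exact: Q1].
by split => //; apply: Qstep.
Qed.

End Main.
Lemma sgn_pos (i c : nat) :
  (if (0 <= (-1) ^+ i * c%:Z)%R then absz ((-1) ^+ i * c%:Z) else 0%N) =
  (if odd i == false then c else 0%N).
Proof.
rewrite -signr_odd; case: (odd i) => /=; rewrite ?expr0 ?expr1 ?mul1r ?mulN1r ?mul1n //.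
by case: c => [|c] //; rewrite oppr_ge0.
Qed.

Lemma sgn_neg (i c : nat) :
  (if ((-1) ^+ i * c%:Z < 0)%R then absz ((-1) ^+ i * c%:Z) else 0%N) =
  (if odd i == true then c else 0%N).
Proof.
rewrite -signr_odd; case: (odd i) => /=; rewrite ?expr0 ?expr1 ?mul1r ?mulN1r ?mul1n //.
by case: c => [|c] //; rewrite oppr_lt0 abszN absz_nat.
Qed.

Lemma inW_zero (k : fieldType) (G : groupType) (chi : G -> k) : inW chi (Hzero k G).
Proof.
split.
  by split => [|g h|g]; rewrite /= ?flatmx0 //; apply/matrixP => [[]].
by exists 1%:M; split; [exact: unitmx1 | case].
Qed.

Theorem lemma4p3 (k : closedFieldType) (G : groupType) (a : G) (chi : G -> k)
  (char0 : [pchar k] =i pred0)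
  (a_central : forall g : G, (a * g)%g = (g * a)%g)
  (chi_char : is_char chi) (chi_a : chi a != 1)
  (chi_inf : forall n : nat, (0 < n)%N -> exists g : G, chi g ^+ n != 1)
  (q_not_root : forall n : nat, (0 < n)%N -> (chi a)^-1 ^+ n != 1)
  (m : nat) (m_ge1 : (1 <= m)%N) :
  green_eq chi
    [:: (1%:Z, Vmod chi m (@eps k G))]
    [seq ((-1) ^+ i * ('C(m.-1 - i, i))%:Z,
          Htens a (Vmod chi 1 (charpow chi i))
                  (Htpow chi a (Vmod chi 2 (@eps k G)) (m.-1 - i.*2)))
       | i <- iota 0 (m.-1./2).+1].
Proof.
have chi_a0 : chi a != 0.
  case: chi_char => h1 hm; apply/eqP => h0.
  by have := hm a a^-1%g; rewrite mulgV h1 h0 mul0r => /eqP; rewrite oner_eq0.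
have ht : forall n, chi a ^+ n.+1 != 1.
  by move=> n; have := q_not_root n.+1 isT; rewrite exprVn invr_eq1.
case: m m_ge1 => // n _.
exists (Hzero k G); split; first exact: inW_zero.
apply: Hsum_congr (Hiso_refl _).
have Q := Qall chi_a0 ht n.
set T := [seq _ | i <- _].
have Hpos : Hiso (posmod T) (BB a chi (Lf n false)).
  rewrite /posmod /T -map_comp.
  rewrite (eq_map (g := fun i => Hmul (if odd i == false then 'C(n - i, i)%N else 0%N) (Wm a chi (i, (n - i.*2)%N)))); last first.
    by move=> i /=; rewrite sgn_pos.
  exact: (Hbig_mul (Wm a chi) (fun i => if odd i == false then 'C(n - i, i)%N else 0%N) (fun i => (i, (n - i.*2)%N))).
have Hneg : Hiso (negmod T) (BB a chi (Lf n true)).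
  rewrite /negmod /T -map_comp.
  rewrite (eq_map (g := fun i => Hmul (if odd i == true then 'C(n - i, i)%N else 0%N) (Wm a chi (i, (n - i.*2)%N)))); last first.
    by move=> i /=; rewrite sgn_neg.
  exact: (Hbig_mul (Wm a chi) (fun i => if odd i == true then 'C(n - i, i)%N else 0%N) (fun i => (i, (n - i.*2)%N))).
have Hps : Hiso (posmod [:: (1%:Z, Vmod chi n.+1 (@eps k G))]) (Vmod chi n.+1 (@eps k G)).
  rewrite /posmod /=.
  eapply Hiso_trans; first exact: Hsum0r.
  exact: Hsum0r.
have Hns : Hiso (negmod [:: (1%:Z, Vmod chi n.+1 (@eps k G))]) (Hzero k G).
  by rewrite /negmod /=; apply: Hsum0r.
eapply Hiso_trans; first exact: Hsum_congr Hps Hneg.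
eapply Hiso_trans; first exact: Q.
eapply Hiso_trans; first exact: Hiso_sym (Hsum0r _).
exact: Hsum_congr (Hiso_sym Hpos) (Hiso_sym Hns).
Qed.
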